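(* Let $l$ be coprime to the conductor $N$. If $G_l$ is a diagonal matrix, then $G_l=\pm\mathbb{I}$.
   Context: Standing setting. $\mathcal{C}$ is a rational conformal field theory (RCFT) with finite set $\mathcal{I}$ of primary fields, vacuum $0\in\mathcal{I}$, central charge $c$ and conformal weights $\Delta_p$. Its genus-one characters afford a unitary representation $\rho$ of $\Gamma(1)=SL(2,\mathbb{Z})$; for $m\in\Gamma(1)$ write $M=\rho(m)$. $S=\rho\begin{pmatrix}0&-1\\1&0\end{pmatrix}$, $T=\rho\begin{pmatrix}1&1\\0&1\end{pmatrix}$. Known properties: $T$ is diagonal of finite order with $T_{pp}=\omega_p=\exp(2\pi i(\Delta_p-c/24))$; $S$ is symmetric; $S^2$ is the charge-conjugation permutation matrix; $S_{0p}>0$ for all $p$; Verlinde numbers are non-negative integers. $F$ is the field generated over $\mathbb{Q}$ by all entries of all $M$; the conductor $N$ is the smallest positive integer with $F\subseteq\mathbb{Q}(\zeta_N)$ and the order of $T$ dividing $N$. For $l$ coprime to $N$, $\sigma_l$ is the automorphism of $\mathbb{Q}(\zeta_N)$ with $\zeta_N\mapsto\zeta_N^l$, applied entrywise to matrices. Galois symmetry: for $l$ coprime to $N$, $\sigma_l(S)=SG_l=G_l^{-1}S$ where $(G_l)_{pq}=\varepsilon_l(q)\delta_{p,\pi_l q}$ for a permutation $\pi_l$ of $\mathcal{I}$ and signs $\varepsilon_l(q)\in\{\pm1\}$; $G_{lm}=G_lG_m$; $\sigma_l(T)=T^l$. *)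

(* Defs.v *)
(* Primaries are indexed by 'I_n.+1, the vacuum is ord0.
   Matrix entries live in algC (algebraic complex numbers). *)
From HB Require Import structures.
From mathcomp Require Import all_boot all_order all_algebra all_fingroup all_field.
Set Implicit Arguments.
Unset Strict Implicit.
Unset Printing Implicit Defensive.
Import Order.TTheory GRing.Theory Num.Theory.
Local Open Scope ring_scope.

Definition SL2Z (m : 'M[int]_2) : Prop := \det m = 1.

(* generators S = (0 -1; 1 0) and T = (1 1; 0 1) *)
Definition Sgen : 'M[int]_2 :=
  \matrix_(i < 2, j < 2) (if i == j then 0 else if val i == 0%N then -1 else 1).
Definition Tgen : 'M[int]_2 :=
  \matrix_(i < 2, j < 2) (if (val i == 1%N) && (val j == 0%N) then 0 else 1).

(* rho is a unitary representation of SL(2,Z) (values off SL(2,Z) irrelevant) *)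
Definition unitary_rep n (rho : 'M[int]_2 -> 'M[algC]_n.+1) : Prop :=
  [/\ rho 1%:M = 1%:M,
      (forall a b, SL2Z a -> SL2Z b -> rho (a *m b) = rho a *m rho b)
    & (forall a, SL2Z a -> rho a *m (map_mx Num.conj (rho a))^T = 1%:M)].

Definition Smx n (rho : 'M[int]_2 -> 'M[algC]_n.+1) := rho Sgen.
Definition Tmx n (rho : 'M[int]_2 -> 'M[algC]_n.+1) := rho Tgen.

Definition verlinde n (S : 'M[algC]_n.+1) (p q r : 'I_n.+1) : algC :=
  \sum_(s < n.+1) S p s * S q s * Num.conj (S r s) / S ord0 s.

Definition rcft_modular_data n (rho : 'M[int]_2 -> 'M[algC]_n.+1) : Prop :=
  let S := Smx rho in let T := Tmx rho in
  [/\ unitary_rep rho,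
      is_diag_mx T /\ (exists k, (0 < k)%N /\ T ^+ k = 1%:M),
      S^T = S /\
      (exists C : 'S_n.+1, (C * C)%g = 1%g /\ S *m S = perm_mx C),
      (forall p, 0 < S ord0 p)
    & (forall p q r, verlinde S p q r \is a Num.nat)].

Definition in_cyclo (N : nat) (x : algC) : Prop :=
  exists (z : algC) (p : {poly rat}), N.-primitive_root z /\ x = (map_poly ratr p).[z].

Definition conductor_prop n (rho : 'M[int]_2 -> 'M[algC]_n.+1) (N : nat) : Prop :=
  [/\ (0 < N)%N,
      (forall m, SL2Z m -> forall i j, in_cyclo N (rho m i j))
    & Tmx rho ^+ N = 1%:M].

Definition is_conductor n (rho : 'M[int]_2 -> 'M[algC]_n.+1) (N : nat) : Prop :=
  conductor_prop rho N /\ (forall M, (M < N)%N -> ~ conductor_prop rho M).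

(* (G_l)_{pq} = eps_l(q) delta_{p, pi_l q}; eps given as a boolean (true = -1) *)
Definition Gmx n (pi : 'S_n.+1) (eps : 'I_n.+1 -> bool) : 'M[algC]_n.+1 :=
  \matrix_(p, q) (if p == pi q then (-1) ^+ eps q else 0).

(* sigma_l is represented by any automorphism u of algC extending
   zeta_N |-> zeta_N^l (entries lie in Q(zeta_N), so the choice is irrelevant) *)
Definition extends_sigma (N l : nat) (u : {rmorphism algC -> algC}) : Prop :=
  forall z : algC, N.-primitive_root z -> u z = z ^+ l.

Definition galois_symmetry n (rho : 'M[int]_2 -> 'M[algC]_n.+1) (N : nat)
  (pi : nat -> 'S_n.+1) (eps : nat -> 'I_n.+1 -> bool) : Prop :=
  forall l, coprime l N ->
    (forall u : {rmorphism algC -> algC}, extends_sigma N l u ->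
       [/\ map_mx u (Smx rho) = Smx rho *m Gmx (pi l) (eps l),
           map_mx u (Smx rho) = invmx (Gmx (pi l) (eps l)) *m Smx rho
         & map_mx u (Tmx rho) = Tmx rho ^+ l])
    /\ (forall m, coprime m N ->
          Gmx (pi (l * m)%N) (eps (l * m)%N) = Gmx (pi l) (eps l) *m Gmx (pi m) (eps m)).

(* Main.v *)
Require Import Defs.
From HB Require Import structures.
From mathcomp Require Import all_boot all_order all_algebra all_fingroup all_field.
Import GRing.Theory Num.Theory.
Local Open Scope ring_scope.

Theorem mainTheorem10 (n : nat) (rho : 'M[int]_2 -> 'M[algC]_n.+1) (N : nat)
  (pi : nat -> 'S_n.+1) (eps : nat -> 'I_n.+1 -> bool) :
  rcft_modular_data rho -> is_conductor rho N -> galois_symmetry rho N pi eps ->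
  forall l : nat, coprime l N ->
    is_diag_mx (Gmx (pi l) (eps l)) ->
    Gmx (pi l) (eps l) = 1%:M \/ Gmx (pi l) (eps l) = - 1%:M.
Proof.
move=> [_ _ _ Spos _] _ Hgal l cop Hdiag.
have [u Hu] := Qn_aut_exists cop.
have Hext : extends_sigma N l u.
  by move=> z pz; apply: Hu; apply: prim_expr_order.
have [H1 H2 _] := (Hgal l cop).1 u Hext.
set G := Gmx (pi l) (eps l) in Hdiag H1 H2 *.
set e := fun q => (-1) ^+ eps l q : algC.
have e2 : forall q, e q * e q = 1.
  by move=> q; rewrite /e -exprMn mulrNN mulr1 expr1n.
have e0 : forall q, e q != 0.
  by move=> q; apply/eqP => h; have := e2 q; rewrite h mul0r => /eqP; rewrite eq_sym oner_eq0.
have Gpq : forall p q, G p q = (p == q)%:R * e q.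
  move=> p q; rewrite /G /Gmx mxE.
  have piq : pi l q = q.
    apply/eqP; apply/negPn/negP => hne.
    have := (is_diag_mxP Hdiag) (pi l q) q hne.
    by rewrite /Gmx mxE eqxx; apply/eqP; apply: e0.
  by rewrite piq; case: (p == q); rewrite ?mul1r ?mul0r.
have GG : G *m G = 1%:M.
  apply/matrixP => i j; rewrite !mxE (bigD1 j) //= big1 ?addr0.
    by rewrite !Gpq eqxx mul1r -mulrA e2 mulr1.
  by move=> k /negPf hk; rewrite (Gpq k j) hk mul0r mulr0.
have Gu : G \in unitmx by case: (mulmx1_unit GG).
have iG : invmx G = G.
  by rewrite -[RHS]mul1mx -(mulVmx Gu) -mulmxA GG mulmx1.
rewrite iG in H2.
have key : forall q, Smx rho ord0 q * e q = e ord0 * Smx rho ord0 q.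
  move=> q.
  have HH : Smx rho *m G = G *m Smx rho by rewrite -H1 -H2.
  have := congr1 (fun M : 'M[algC]_n.+1 => M ord0 q) HH.
  rewrite /= !mxE (bigD1 q) //= big1 ?addr0; last first.
    by move=> k /negPf hk; rewrite Gpq hk mul0r mulr0.
  rewrite (bigD1 ord0) //= big1 ?addr0; last first.
    by move=> k /negPf hk; rewrite Gpq eq_sym hk mul0r mul0r.
  by rewrite !Gpq !eqxx !mul1r.
have eq0 : forall q, e q = e ord0.
  move=> q; have := key q; rewrite mulrC => /mulIf; apply.
  by have := Spos q; rewrite lt0r => /andP[].
have GE : G = (e ord0)%:M.
  apply/matrixP => i j; rewrite Gpq mxE eq0.
  by case: eqP => _; rewrite ?mul1r ?mul0r.
rewrite GE /e; case: (eps l ord0) => /=.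
  by right; rewrite expr1 raddfN.
by left; rewrite expr0.
Qed.
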